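(* A bitopological space $(X,\tau[tt],\tau[ff])$ is $\mathbb{B}$-sober if and only if for every pair $(K_{tt},K_{ff})$, where $K_{tt}$ is an irreducible closed subset of $(X,\tau[tt])$ and $K_{ff}$ is an irreducible closed subset of $(X,\tau[ff])$, there is a unique point $x\in X$ such that $K_{tt}$ is the closure of $\{x\}$ in $(X,\tau[tt])$ and $K_{ff}$ is the closure of $\{x\}$ in $(X,\tau[ff])$.
   Context: $\mathbb{B}=\{0,1,tt,ff\}$ is the four-element Boolean algebra with bottom $0$, top $1$, and $tt,ff$ incomparable complements. A bitopological space $(X,\tau[tt],\tau[ff])$ is identified with the $\mathbb{B}$-topology $\tau=\{\lambda\colon X\to\mathbb{B}: \lambda[tt]\in\tau[tt],\ \lambda[ff]\in\tau[ff]\}$, where $\lambda[b]=\{x:\lambda(x)\ge b\}$. For $b\in\mathbb{B}$, $b_X$ is the constant map with value $b$. A $\mathbb{B}$-point of $\tau$ is a frame homomorphism $p\colon\tau\to\mathbb{B}$ (preserving finite meets and arbitrary joins) with $p(b_X)=b$ for all $b\in\mathbb{B}$. The space is $\mathbb{B}$-sober if for every $\mathbb{B}$-point $p$ of $\tau$ there is a unique $x\in X$ with $p(\lambda)=\lambda(x)$ for all $\lambda\in\tau$. An irreducible closed subset of a topological space is a nonempty closed set not contained in the union of two closed sets unless contained in one of them. *)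

(* Defs.v *)
Definition is_topology {X : Type} (O : (X -> Prop) -> Prop) : Prop :=
  O (fun _ => True) /\
  (forall A B, O A -> O B -> O (fun x => A x /\ B x)) /\
  (forall F : (X -> Prop) -> Prop, (forall A, F A -> O A) ->
       O (fun x => exists A, F A /\ A x)).

Definition is_closed {X : Type} (O : (X -> Prop) -> Prop) (C : X -> Prop) : Prop :=
  O (fun x => ~ C x).

Definition closure {X : Type} (O : (X -> Prop) -> Prop) (A : X -> Prop) : X -> Prop :=
  fun y => forall C, is_closed O C -> (forall z, A z -> C z) -> C y.

Definition irreducible_closed {X : Type} (O : (X -> Prop) -> Prop) (K : X -> Prop) : Prop :=
  is_closed O K /\ (exists x, K x) /\
  (forall A B, is_closed O A -> is_closed O B ->
     (forall x, K x -> A x \/ B x) ->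
     (forall x, K x -> A x) \/ (forall x, K x -> B x)).

(** The four-element Boolean algebra B = {0,1,tt,ff}. *)
Inductive B4 : Type := B0 | B1 | Btt | Bff.

Definition Ble (a b : B4) : Prop :=
  match a, b with
  | B0, _ => True
  | _, B1 => True
  | Btt, Btt => True
  | Bff, Bff => True
  | _, _ => False
  end.

Definition Blub {I : Type} (F : I -> B4) (b : B4) : Prop :=
  (forall i, Ble (F i) b) /\ (forall c, (forall i, Ble (F i) c) -> Ble b c).
Definition Bglb (a b c : B4) : Prop :=
  Ble c a /\ Ble c b /\ (forall d, Ble d a -> Ble d b -> Ble d c).

Definition cut {X : Type} (b : B4) (l : X -> B4) : X -> Prop := fun x => Ble b (l x).

Definition Btopology {X : Type} (Ott Off : (X -> Prop) -> Prop) (l : X -> B4) : Prop :=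
  Ott (cut Btt l) /\ Off (cut Bff l).

Definition constB {X : Type} (b : B4) : X -> B4 := fun _ => b.

Definition ple {X : Type} (l m : X -> B4) : Prop := forall x, Ble (l x) (m x).

Definition is_lub_in {X I : Type} (tau : (X -> B4) -> Prop) (F : I -> X -> B4)
  (l : X -> B4) : Prop :=
  tau l /\ (forall i, ple (F i) l) /\
  (forall m, tau m -> (forall i, ple (F i) m) -> ple l m).
Definition is_glb_in {X : Type} (tau : (X -> B4) -> Prop) (l m n : X -> B4) : Prop :=
  tau n /\ ple n l /\ ple n m /\
  (forall k, tau k -> ple k l -> ple k m -> ple k n).

(** A B-point of tau: a frame homomorphism tau -> B (preserving finite meets
    and arbitrary joins) with p(b_X) = b for all b. *)
Definition Bpoint {X : Type} (tau : (X -> B4) -> Prop) (p : (X -> B4) -> B4) : Prop :=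
  (forall b, p (constB b) = b) /\
  (forall l m n, tau l -> tau m -> is_glb_in tau l m n -> Bglb (p l) (p m) (p n)) /\
  (forall (I : Type) (F : I -> X -> B4) l,
     (forall i, tau (F i)) -> is_lub_in tau F l -> Blub (fun i => p (F i)) (p l)).

Definition Bsober {X : Type} (Ott Off : (X -> Prop) -> Prop) : Prop :=
  forall p, Bpoint (Btopology Ott Off) p ->
    exists! x : X, forall l, Btopology Ott Off l -> p l = l x.

(* Main.v *)
Require Import Defs.
From Stdlib Require Import Classical ClassicalEpsilon FunctionalExtensionality PropExtensionality.

Definition dec (P : Prop) : bool := if excluded_middle_informative P then true else false.
Lemma dec_t (P : Prop) : P -> dec P = true.
Proof. unfold dec; destruct (excluded_middle_informative P); tauto. Qed.
Lemma dec_f (P : Prop) : ~ P -> dec P = false.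
Proof. unfold dec; destruct (excluded_middle_informative P); tauto. Qed.
Lemma dec_iff (P : Prop) : dec P = true <-> P.
Proof. unfold dec; destruct (excluded_middle_informative P); intuition discriminate. Qed.
Lemma dec_ext (P Q : Prop) : (P <-> Q) -> dec P = dec Q.
Proof. intros H. f_equal. apply propositional_extensionality; exact H. Qed.

Definition pairB (a b : bool) : B4 :=
  match a, b with true, true => B1 | true, false => Btt | false, true => Bff | false, false => B0 end.
Definition mk {X : Type} (U V : X -> Prop) : X -> B4 := fun x => pairB (dec (U x)) (dec (V x)).

Lemma Ble_tt_pair a b : Ble Btt (pairB a b) <-> a = true.
Proof. destruct a, b; simpl; intuition discriminate. Qed.
Lemma Ble_ff_pair a b : Ble Bff (pairB a b) <-> b = true.
Proof. destruct a, b; simpl; intuition discriminate. Qed.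
Lemma cut_mk_tt {X} (U V : X -> Prop) x : cut Btt (mk U V) x <-> U x.
Proof. unfold cut, mk. rewrite Ble_tt_pair, dec_iff. tauto. Qed.
Lemma cut_mk_ff {X} (U V : X -> Prop) x : cut Bff (mk U V) x <-> V x.
Proof. unfold cut, mk. rewrite Ble_ff_pair, dec_iff. tauto. Qed.
Lemma pair_cut v : pairB (dec (Ble Btt v)) (dec (Ble Bff v)) = v.
Proof.
  destruct v; simpl;
  repeat first [rewrite (dec_t True) by exact I | rewrite (dec_f False) by tauto]; reflexivity.
Qed.
Lemma Ble_char v w : Ble v w <-> (Ble Btt v -> Ble Btt w) /\ (Ble Bff v -> Ble Bff w).
Proof. destruct v, w; simpl; tauto. Qed.
Lemma Ble_refl v : Ble v v. Proof. destruct v; simpl; auto. Qed.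
Lemma Ble_trans u v w : Ble u v -> Ble v w -> Ble u w.
Proof. destruct u, v, w; simpl; tauto. Qed.
Lemma ple_cut {X} (l m : X -> B4) x b : ple l m -> cut b l x -> cut b m x.
Proof. unfold cut; intros H Hb; eapply Ble_trans; [exact Hb | apply H]. Qed.

Lemma mk_eq {X} (l : X -> B4) : l = mk (cut Btt l) (cut Bff l).
Proof. extensionality x; unfold mk, cut; symmetry; apply pair_cut. Qed.
Lemma mk_ext {X} (U U' V V' : X -> Prop) :
  (forall x, U x <-> U' x) -> (forall x, V x <-> V' x) -> mk U V = mk U' V'.
Proof. intros H1 H2; extensionality x; unfold mk; rewrite (dec_ext _ _ (H1 x)), (dec_ext _ _ (H2 x)); auto. Qed.
Lemma mk_const {X} b : @constB X b = mk (cut Btt (constB b)) (cut Bff (constB b)).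
Proof. apply mk_eq. Qed.

Lemma Oext {X} (O : (X -> Prop) -> Prop) A B : O A -> (forall x, A x <-> B x) -> O B.
Proof.
  intros H E. replace B with A; auto. extensionality x. apply propositional_extensionality. apply E.
Qed.
Lemma open_union {X} (O : (X -> Prop) -> Prop) (I : Type) (G : I -> X -> Prop) :
  is_topology O -> (forall i, O (G i)) -> O (fun x => exists i, G i x).
Proof.
  intros [_ [_ H]] HG. eapply Oext. apply (H (fun A => exists i, A = G i)).
  - intros A [i ->]; auto.
  - intros x; split.
    + intros [A [[i ->] Hx]]; eauto.
    + intros [i Hi]; exists (G i); eauto.
Qed.
Lemma open_empty {X} (O : (X -> Prop) -> Prop) : is_topology O -> O (fun _ => False).
Proof.
  intros T. eapply Oext. apply (open_union O False (fun i _ => match i with end)); auto.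
  intros [].
  intros x; split; [intros [[] _] | intros []].
Qed.
Lemma open_inter {X} (O : (X -> Prop) -> Prop) U V :
  is_topology O -> O U -> O V -> O (fun x => U x /\ V x).
Proof. intros [_ [H _]]; auto. Qed.
Lemma open_full {X} (O : (X -> Prop) -> Prop) : is_topology O -> O (fun _ => True).
Proof. intros [H _]; auto. Qed.
Lemma closed_compl {X} (O : (X -> Prop) -> Prop) U : O U -> is_closed O (fun x => ~ U x).
Proof.
  unfold is_closed; intros H; eapply Oext; eauto; intro x; split; [tauto | apply NNPP].
Qed.

Lemma cl_char {X} (O : (X -> Prop) -> Prop) x y :
  closure O (fun z => z = x) y <-> forall U, O U -> U y -> U x.
Proof.
  split.
  - intros Hc U HU Uy. apply NNPP; intro nUx.
    apply (Hc (fun w => ~ U w)); [apply closed_compl; auto | intros z ->; auto | auto].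
  - intros H C HC Cx. apply NNPP; intro nCy.
    specialize (H _ HC nCy). apply H. apply Cx; reflexivity.
Qed.

Lemma Mlem {X} (O : (X -> Prop) -> Prop) K x :
  is_closed O K ->
  ((forall y, K y <-> closure O (fun z => z = x) y) <->
   (forall U, O U -> ((exists z, K z /\ U z) <-> U x))).
Proof.
  intros HK. split.
  - intros E U HU; split.
    + intros [z [Kz Uz]]. apply E in Kz. rewrite cl_char in Kz. exact (Kz U HU Uz).
    + intros Ux. exists x. split; auto. apply E. rewrite cl_char; auto.
  - intros H y. rewrite cl_char. split.
    + intros Ky U HU Uy. apply H; eauto.
    + intros Hy. assert (Kx : K x).
      { apply NNPP; intro nKx. destruct (proj2 (H _ HK) nKx) as [z [Kz nKz]]; auto. }
      apply NNPP; intro nKy. exact (Hy _ HK nKy Kx).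
Qed.

Lemma tau_mk {X} (Ott Off : (X -> Prop) -> Prop) U V :
  Ott U -> Off V -> Btopology Ott Off (mk U V).
Proof.
  intros HU HV; split.
  - eapply Oext; [exact HU|]. intro x; rewrite cut_mk_tt; tauto.
  - eapply Oext; [exact HV|]. intro x; rewrite cut_mk_ff; tauto.
Qed.

Lemma ple_mk {X} (l : X -> B4) U V :
  (forall x, U x -> cut Btt l x) -> (forall x, V x -> cut Bff l x) -> ple (mk U V) l.
Proof.
  intros H1 H2 x. apply Ble_char. split.
  - intro H. apply H1. apply (cut_mk_tt U V x). exact H.
  - intro H. apply H2. apply (cut_mk_ff U V x). exact H.
Qed.

Lemma glb_mk {X} (Ott Off : (X -> Prop) -> Prop) U V U' V' :
  is_topology Ott -> is_topology Off -> Ott U -> Ott U' -> Off V -> Off V' ->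
  is_glb_in (Btopology Ott Off) (mk U V) (mk U' V')
     (mk (fun x => U x /\ U' x) (fun x => V x /\ V' x)).
Proof.
  intros T1 T2 HU HU' HV HV'. split; [|split; [|split]].
  - apply tau_mk; apply open_inter; auto.
  - apply ple_mk; intros x H; [apply cut_mk_tt | apply cut_mk_ff]; tauto.
  - apply ple_mk; intros x H; [apply cut_mk_tt | apply cut_mk_ff]; tauto.
  - intros k _ H1 H2. intro x. apply Ble_char. split; intro H.
    + apply cut_mk_tt. split; apply (cut_mk_tt _ V x), (ple_cut _ _ _ _ H1) || apply (cut_mk_tt _ V' x), (ple_cut _ _ _ _ H2); exact H.
    + apply cut_mk_ff. split; apply (cut_mk_ff U _ x), (ple_cut _ _ _ _ H1) || apply (cut_mk_ff U' _ x), (ple_cut _ _ _ _ H2); exact H.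
Qed.

Lemma lub_mk {X} (Ott Off : (X -> Prop) -> Prop) (I : Type) (G H : I -> X -> Prop) :
  is_topology Ott -> is_topology Off -> (forall i, Ott (G i)) -> (forall i, Off (H i)) ->
  is_lub_in (Btopology Ott Off) (fun i => mk (G i) (H i))
     (mk (fun x => exists i, G i x) (fun x => exists i, H i x)).
Proof.
  intros T1 T2 HG HH. split; [|split].
  - apply tau_mk; apply open_union; auto.
  - intro i. apply ple_mk; intros x Hx; [apply cut_mk_tt | apply cut_mk_ff]; eauto.
  - intros m _ Hm. apply ple_mk.
    + intros x [i Hi]. apply (ple_cut _ _ _ _ (Hm i)). apply cut_mk_tt; auto.
    + intros x [i Hi]. apply (ple_cut _ _ _ _ (Hm i)). apply cut_mk_ff; auto.
Qed.

Lemma glb_cut {X} (Ott Off : (X -> Prop) -> Prop) l m n :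
  is_topology Ott -> is_topology Off ->
  Btopology Ott Off l -> Btopology Ott Off m -> is_glb_in (Btopology Ott Off) l m n ->
  (forall x, cut Btt n x <-> cut Btt l x /\ cut Btt m x) /\
  (forall x, cut Bff n x <-> cut Bff l x /\ cut Bff m x).
Proof.
  intros T1 T2 [Hl1 Hl2] [Hm1 Hm2] Hn.
  pose proof (glb_mk Ott Off _ _ _ _ T1 T2 Hl1 Hm1 Hl2 Hm2) as G.
  rewrite <- !mk_eq in G.
  destruct Hn as [Hn [Hnl [Hnm Hnk]]]. destruct G as [Gk [Gl [Gm Gmax]]].
  pose proof (Gmax n Hn Hnl Hnm) as P1. pose proof (Hnk _ Gk Gl Gm) as P2.
  split; intro x; split; intro H.
  - apply (ple_cut _ _ _ _ P1) in H. apply cut_mk_tt in H. exact H.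
  - apply (ple_cut _ _ _ _ P2). apply cut_mk_tt. exact H.
  - apply (ple_cut _ _ _ _ P1) in H. apply cut_mk_ff in H. exact H.
  - apply (ple_cut _ _ _ _ P2). apply cut_mk_ff. exact H.
Qed.

Lemma lub_cut {X} (Ott Off : (X -> Prop) -> Prop) (I : Type) (F : I -> X -> B4) l :
  is_topology Ott -> is_topology Off ->
  (forall i, Btopology Ott Off (F i)) -> is_lub_in (Btopology Ott Off) F l ->
  (forall x, cut Btt l x <-> exists i, cut Btt (F i) x) /\
  (forall x, cut Bff l x <-> exists i, cut Bff (F i) x).
Proof.
  intros T1 T2 HF Hl.
  pose proof (lub_mk Ott Off I (fun i => cut Btt (F i)) (fun i => cut Bff (F i)) T1 T2
     (fun i => proj1 (HF i)) (fun i => proj2 (HF i))) as G.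
  destruct Hl as [Hl [HFl Hlmax]]. destruct G as [Gk [GF Gmax]].
  pose proof (Gmax l Hl (fun i => eq_ind _ (fun f => ple f l) (HFl i) _ (mk_eq (F i)))) as P1.
  pose proof (Hlmax _ Gk (fun i => eq_ind _ (fun f => ple f _) (GF i) _ (eq_sym (mk_eq (F i))))) as P2.
  split; intro x; split; intro H.
  - apply (ple_cut _ _ _ _ P2) in H. apply cut_mk_tt in H. exact H.
  - apply (ple_cut _ _ _ _ P1). apply cut_mk_tt. exact H.
  - apply (ple_cut _ _ _ _ P2) in H. apply cut_mk_ff in H. exact H.
  - apply (ple_cut _ _ _ _ P1). apply cut_mk_ff. exact H.
Qed.

Lemma bool_and a1 a2 a3 : (a3 = true <-> a1 = true /\ a2 = true) -> a3 = andb a1 a2.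
Proof. destruct a1, a2, a3; simpl; intuition congruence. Qed.

Lemma pair_glb a1 a2 b1 b2 : Bglb (pairB a1 b1) (pairB a2 b2) (pairB (andb a1 a2) (andb b1 b2)).
Proof. destruct a1, a2, b1, b2; unfold Bglb; simpl; repeat split; try (intros []; simpl; tauto). Qed.

Lemma Ble_pair A B c : (A = true -> Ble Btt c) -> (B = true -> Ble Bff c) -> Ble (pairB A B) c.
Proof. destruct A, B, c; simpl; intuition. Qed.
Lemma Ble_pair_tt a b c : Ble (pairB a b) c -> a = true -> Ble Btt c.
Proof. destruct a, b, c; simpl; intuition discriminate. Qed.
Lemma Ble_pair_ff a b c : Ble (pairB a b) c -> b = true -> Ble Bff c.
Proof. destruct a, b, c; simpl; intuition discriminate. Qed.

Lemma pair_lub (I : Type) (a b : I -> bool) A B :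
  (A = true <-> exists i, a i = true) -> (B = true <-> exists i, b i = true) ->
  Blub (fun i => pairB (a i) (b i)) (pairB A B).
Proof.
  intros HA HB. split.
  - intro i. apply Ble_pair; intro E; [apply Ble_tt_pair, HA | apply Ble_ff_pair, HB]; eauto.
  - intros c Hc. apply Ble_pair; intro E; [apply HA in E | apply HB in E]; destruct E as [i Ei].
    + eapply Ble_pair_tt; eauto.
    + eapply Ble_pair_ff; eauto.
Qed.

Definition meets {X} (K U : X -> Prop) : Prop := exists z, K z /\ U z.

Lemma irr_meet {X} (O : (X -> Prop) -> Prop) K U V :
  irreducible_closed O K -> O U -> O V -> meets K U -> meets K V ->
  meets K (fun x => U x /\ V x).
Proof.
  intros [_ [_ Hi]] HU HV [x [Kx Ux]] [y [Ky Vy]]. apply NNPP; intro N.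
  destruct (Hi (fun w => ~ U w) (fun w => ~ V w) (closed_compl O U HU) (closed_compl O V HV)) as [H|H].
  - intros z Kz. apply NNPP; intro N2. apply N. exists z; split; auto.
    split; apply NNPP; tauto.
  - exact (H x Kx Ux).
  - exact (H y Ky Vy).
Qed.

Lemma dir1 {X} (Ott Off : (X -> Prop) -> Prop) :
  is_topology Ott -> is_topology Off -> Bsober Ott Off ->
   (forall Ktt Kff : X -> Prop,
      irreducible_closed Ott Ktt -> irreducible_closed Off Kff ->
      exists! x : X,
        (forall y, Ktt y <-> closure Ott (fun z => z = x) y) /\
        (forall y, Kff y <-> closure Off (fun z => z = x) y)).
Proof.
  intros T1 T2 Hs Ktt Kff Itt Iff.
  set (p := fun l : X -> B4 => pairB (dec (meets Ktt (cut Btt l))) (dec (meets Kff (cut Bff l)))).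
  assert (Hp : Bpoint (Btopology Ott Off) p).
  { pose proof Itt as [Ctt [[xt Nt] _]]. pose proof Iff as [Cff [[xf Nf] _]].
    split; [|split].
    - intros b. unfold p, meets, cut, constB.
      destruct b; simpl;
      repeat first [ rewrite (dec_t (exists z, Ktt z /\ True)) by (exists xt; auto)
                   | rewrite (dec_t (exists z, Kff z /\ True)) by (exists xf; auto)
                   | rewrite (dec_f (exists z, _ z /\ False)) by (intros [? [? []]]) ];
      reflexivity.
    - intros l m n Hl Hm Hn. destruct (glb_cut Ott Off l m n T1 T2 Hl Hm Hn) as [G1 G2].
      unfold p. rewrite (bool_and (dec (meets Ktt (cut Btt l))) (dec (meets Ktt (cut Btt m))) (dec (meets Ktt (cut Btt n)))).
      rewrite (bool_and (dec (meets Kff (cut Bff l))) (dec (meets Kff (cut Bff m))) (dec (meets Kff (cut Bff n)))).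
      apply pair_glb.
      + rewrite !dec_iff. split.
        * intros [z [Kz Hz]]. apply G2 in Hz. split; exists z; tauto.
        * intros [H1 H2]. destruct (irr_meet Off Kff _ _ Iff (proj2 Hl) (proj2 Hm) H1 H2) as [z Hz].
          exists z. rewrite G2. tauto.
      + rewrite !dec_iff. split.
        * intros [z [Kz Hz]]. apply G1 in Hz. split; exists z; tauto.
        * intros [H1 H2]. destruct (irr_meet Ott Ktt _ _ Itt (proj1 Hl) (proj1 Hm) H1 H2) as [z Hz].
          exists z. rewrite G1. tauto.
    - intros I F l HF Hl. destruct (lub_cut Ott Off I F l T1 T2 HF Hl) as [G1 G2].
      unfold p. apply pair_lub.
      + rewrite (dec_iff (meets Ktt (cut Btt l))). split.
        * intros [z [Kz Hz]]. apply G1 in Hz. destruct Hz as [i Hi]. exists i. apply (proj2 (dec_iff _)). exists z; auto.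
        * intros [i Hi]. apply (proj1 (dec_iff _)) in Hi. destruct Hi as [z [Kz Hz]]. exists z. rewrite G1. eauto.
      + rewrite (dec_iff (meets Kff (cut Bff l))). split.
        * intros [z [Kz Hz]]. apply G2 in Hz. destruct Hz as [i Hi]. exists i. apply (proj2 (dec_iff _)). exists z; auto.
        * intros [i Hi]. apply (proj1 (dec_iff _)) in Hi. destruct Hi as [z [Kz Hz]]. exists z. rewrite G2. eauto. }
  destruct (Hs p Hp) as [x [Hx Hu]].
  assert (Ptt : forall U, Ott U -> (meets Ktt U <-> U x)).
  { intros U HU. pose proof (Hx _ (tau_mk Ott Off U (fun _ => False) HU (open_empty Off T2))) as E.
    assert (E2 : Ble Btt (p (mk U (fun _ => False))) <-> Ble Btt (mk U (fun _ => False) x)) by (rewrite E; tauto).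
    unfold p in E2. rewrite Ble_tt_pair, dec_iff in E2. fold (cut Btt (mk U (fun _ => False)) x) in E2.
    rewrite cut_mk_tt in E2. rewrite <- E2. unfold meets. split; intros [z Hz]; exists z; rewrite ?cut_mk_tt in *; auto. }
  assert (Pff : forall U, Off U -> (meets Kff U <-> U x)).
  { intros U HU. pose proof (Hx _ (tau_mk Ott Off (fun _ => False) U (open_empty Ott T1) HU)) as E.
    assert (E2 : Ble Bff (p (mk (fun _ => False) U)) <-> Ble Bff (mk (fun _ => False) U x)) by (rewrite E; tauto).
    unfold p in E2. rewrite Ble_ff_pair, dec_iff in E2. fold (cut Bff (mk (fun _ => False) U) x) in E2.
    rewrite cut_mk_ff in E2. rewrite <- E2. unfold meets. split; intros [z Hz]; exists z; rewrite ?cut_mk_ff in *; auto. }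
  exists x. split; [split|].
  - apply (Mlem Ott Ktt x (proj1 Itt)). exact Ptt.
  - apply (Mlem Off Kff x (proj1 Iff)). exact Pff.
  - intros x' [E1 E2]. apply Hu. intros l Hl.
    pose proof (proj1 (Mlem Ott Ktt x' (proj1 Itt)) E1) as F1. pose proof (proj1 (Mlem Off Kff x' (proj1 Iff)) E2) as F2.
    unfold p. rewrite (dec_ext (meets Ktt (cut Btt l)) _ (F1 _ (proj1 Hl))), (dec_ext (meets Kff (cut Bff l)) _ (F2 _ (proj2 Hl))).
    apply pair_cut.
Qed.

Lemma other_atom b : b = Btt \/ b = Bff -> exists c, (forall v, ~ Ble b v -> Ble v c) /\ ~ Ble b c.
Proof.
  intros [-> | ->]; [exists Bff | exists Btt]; split; try (intros v; destruct v; simpl; tauto); simpl; tauto.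
Qed.

Lemma filt {X} (tau : (X -> B4) -> Prop) (O : (X -> Prop) -> Prop) b
  (emb : (X -> Prop) -> X -> B4) p :
  is_topology O -> Bpoint tau p ->
  (forall U, O U -> tau (emb U)) ->
  (forall U V, (forall x, U x <-> V x) -> emb U = emb V) ->
  emb (fun _ => True) = constB b ->
  (forall U V, O U -> O V -> is_glb_in tau (emb U) (emb V) (emb (fun x => U x /\ V x))) ->
  (forall (I : Type) (G : I -> X -> Prop), (forall i, O (G i)) ->
      is_lub_in tau (fun i => emb (G i)) (emb (fun x => exists i, G i x))) ->
  (b = Btt \/ b = Bff) ->
  irreducible_closed O (fun y => forall U, O U -> U y -> Ble b (p (emb U))) /\
  (forall W, O W -> (Ble b (p (emb W)) <->
       exists z, (forall U, O U -> U z -> Ble b (p (emb U))) /\ W z)).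
Proof.
  intros T Hp Htau Hext Hfull Hglb Hlub Hb.
  destruct Hp as [Hc [Hm Hj]].
  set (F := fun U => Ble b (p (emb U))).
  set (K := fun y => forall U, O U -> U y -> F U).
  assert (F1 : F (fun _ => True)).
  { unfold F. rewrite Hfull, Hc. apply Ble_refl. }
  assert (F2 : forall U V, O U -> O V -> F U -> F V -> F (fun x => U x /\ V x)).
  { intros U V HU HV FU FV. unfold F in *.
    destruct (Hm _ _ _ (Htau U HU) (Htau V HV) (Hglb U V HU HV)) as [_ [_ H]]. auto. }
  assert (F4 : forall (I : Type) (G : I -> X -> Prop), (forall i, O (G i)) ->
                 F (fun x => exists i, G i x) -> exists i, F (G i)).
  { intros I G HG HF. apply NNPP; intro N.
    destruct (other_atom b Hb) as [c [Hc1 Hc2]].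
    destruct (Hj I (fun i => emb (G i)) _ (fun i => Htau _ (HG i)) (Hlub I G HG)) as [_ Hl].
    apply Hc2. eapply Ble_trans; [exact HF|]. apply Hl.
    intro i. apply Hc1. intro Fi. apply N. exists i. exact Fi. }
  assert (F3 : forall U V, O U -> O V -> (forall x, U x -> V x) -> F U -> F V).
  { intros U V HU HV Hsub FU.
    set (G := fun bb : bool => if bb then U else V).
    assert (HG : forall i, O (G i)) by (intros []; simpl; auto).
    destruct (Hj bool (fun i => emb (G i)) _ (fun i => Htau _ (HG i)) (Hlub bool G HG)) as [Hl _].
    specialize (Hl true). simpl in Hl.
    rewrite (Hext (fun x => exists i, G i x) V) in Hl.
    - unfold F in *. eapply Ble_trans; [exact FU | exact Hl].
    - intros x; split; [intros [[] Hx]; simpl in Hx; auto | intros Hx; exists false; exact Hx]. }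
  assert (F5 : forall W, O W -> (F W <-> exists z, K z /\ W z)).
  { intros W HW. split.
    - intros FW. apply NNPP; intro N.
      set (I := {U : X -> Prop | O U /\ ~ F U}).
      set (G := fun i : I => proj1_sig i).
      assert (HG : forall i, O (G i)) by (intros i; exact (proj1 (proj2_sig i))).
      assert (FW2 : F (fun x => exists i, G i x)).
      2:{ destruct (F4 I G HG FW2) as [[U [HU nFU]] FU]. exact (nFU FU). }
      apply (F3 W (fun x => exists i, G i x) HW (open_union O I G T HG)); [|exact FW].
        intros x Wx. assert (nK : ~ K x) by (intro Kx; apply N; exists x; auto).
        unfold K in nK. apply not_all_ex_not in nK. destruct nK as [U nK].
        apply NNPP; intro N2. apply nK. intros HU Ux. apply NNPP; intro nFU.
        apply N2. exists (exist _ U (conj HU nFU)). exact Ux.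
    - intros [z [Kz Wz]]. exact (Kz W HW Wz). }
  split; [split; [|split] | exact F5].
  - unfold is_closed.
    set (I := {U : X -> Prop | O U /\ ~ F U}).
    set (G := fun i : I => proj1_sig i).
    assert (HG : forall i, O (G i)) by (intros i; exact (proj1 (proj2_sig i))).
    eapply Oext; [exact (open_union O I G T HG)|]. intros x; split.
    + intros [[U [HU nFU]] Ux] Kx. exact (nFU (Kx U HU Ux)).
    + intros nK. unfold K in nK. apply not_all_ex_not in nK. destruct nK as [U nK].
      apply NNPP; intro N2. apply nK. intros HU Ux. apply NNPP; intro nFU.
      apply N2. exists (exist _ U (conj HU nFU)). exact Ux.
  - destruct (proj1 (F5 _ (open_full O T)) F1) as [z [Kz _]]. exists z; exact Kz.
  - intros A B HA HB Hcov. apply NNPP; intro N.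
    apply not_or_and in N. destruct N as [NA NB].
    apply not_all_ex_not in NA. destruct NA as [y1 NA].
    apply not_all_ex_not in NB. destruct NB as [y2 NB].
    apply imply_to_and in NA. apply imply_to_and in NB.
    destruct NA as [K1 nA]. destruct NB as [K2 nB].
    assert (FA : F (fun w => ~ A w)) by exact (K1 _ HA nA).
    assert (FB : F (fun w => ~ B w)) by exact (K2 _ HB nB).
    destruct (proj1 (F5 _ (open_inter O _ _ T HA HB)) (F2 _ _ HA HB FA FB)) as [z [Kz [nAz nBz]]].
    destruct (Hcov z Kz); auto.
Qed.

Lemma glb_side v b w : Bglb v b w -> (Ble b w <-> Ble b v).
Proof.
  intros [H1 [H2 H3]]. split.
  - intro H. eapply Ble_trans; eauto.
  - intro H. apply H3; auto. apply Ble_refl.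
Qed.

Lemma side_tt {X} (Ott Off : (X -> Prop) -> Prop) p l :
  is_topology Ott -> is_topology Off -> Bpoint (Btopology Ott Off) p ->
  Btopology Ott Off l ->
  (Ble Btt (p l) <-> Ble Btt (p (mk (cut Btt l) (fun _ => False)))).
Proof.
  intros T1 T2 [Hc [Hm _]] Hl.
  pose proof (glb_mk Ott Off (cut Btt l) (cut Bff l) (fun _ => True) (fun _ => False) T1 T2
     (proj1 Hl) (open_full Ott T1) (proj2 Hl) (open_empty Off T2)) as G.
  assert (E : mk (fun _ : X => True) (fun _ => False) = constB Btt)
    by (rewrite (mk_const Btt); apply mk_ext; unfold cut, constB; simpl; tauto).
  rewrite <- mk_eq, E in G.
  rewrite (mk_ext _ (cut Btt l) _ (fun _ => False)) in G by (intro; tauto).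
  assert (Tc : Btopology Ott Off (constB Btt)) by (rewrite <- E; apply tau_mk; [apply open_full | apply open_empty]; auto).
  pose proof (Hm _ _ _ Hl Tc G) as B. rewrite Hc in B.
  symmetry. apply (glb_side _ _ _ B).
Qed.

Lemma side_ff {X} (Ott Off : (X -> Prop) -> Prop) p l :
  is_topology Ott -> is_topology Off -> Bpoint (Btopology Ott Off) p ->
  Btopology Ott Off l ->
  (Ble Bff (p l) <-> Ble Bff (p (mk (fun _ => False) (cut Bff l)))).
Proof.
  intros T1 T2 [Hc [Hm _]] Hl.
  pose proof (glb_mk Ott Off (cut Btt l) (cut Bff l) (fun _ => False) (fun _ => True) T1 T2
     (proj1 Hl) (open_empty Ott T1) (proj2 Hl) (open_full Off T2)) as G.
  assert (E : mk (fun _ : X => False) (fun _ => True) = constB Bff)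
    by (rewrite (mk_const Bff); apply mk_ext; unfold cut, constB; simpl; tauto).
  rewrite <- mk_eq, E in G.
  rewrite (mk_ext _ (fun _ => False) _ (cut Bff l)) in G by (intro; tauto).
  assert (Tc : Btopology Ott Off (constB Bff)) by (rewrite <- E; apply tau_mk; [apply open_empty | apply open_full]; auto).
  pose proof (Hm _ _ _ Hl Tc G) as B. rewrite Hc in B.
  symmetry. apply (glb_side _ _ _ B).
Qed.

Lemma dir2 {X} (Ott Off : (X -> Prop) -> Prop) :
  is_topology Ott -> is_topology Off ->
   (forall Ktt Kff : X -> Prop,
      irreducible_closed Ott Ktt -> irreducible_closed Off Kff ->
      exists! x : X,
        (forall y, Ktt y <-> closure Ott (fun z => z = x) y) /\
        (forall y, Kff y <-> closure Off (fun z => z = x) y)) ->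
  Bsober Ott Off.
Proof.
  intros T1 T2 H p Hp.
  pose proof (open_empty Ott T1) as Et. pose proof (open_empty Off T2) as Ef.
  destruct (filt (Btopology Ott Off) Ott Btt (fun U => mk U (fun _ => False)) p T1 Hp)
    as [Itt Ftt].
  - intros U HU. apply tau_mk; auto.
  - intros U V E. apply mk_ext; tauto.
  - rewrite (mk_const Btt); apply mk_ext; unfold cut, constB; simpl; tauto.
  - intros U V HU HV.
    replace (mk (fun x => U x /\ V x) (fun _ : X => False))
      with (mk (fun x => U x /\ V x) (fun _ : X => False /\ False)) by (apply mk_ext; tauto).
    apply glb_mk; auto.
  - intros I G HG.
    replace (mk (fun x => exists i, G i x) (fun _ : X => False))
      with (mk (fun x => exists i, G i x) (fun x : X => exists i : I, False))
      by (apply mk_ext; intro; [tauto | split; [intros [_ []] | intros []]]).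
    apply (lub_mk Ott Off I G (fun _ _ => False)); auto.
  - auto.
  - destruct (filt (Btopology Ott Off) Off Bff (fun U => mk (fun _ => False) U) p T2 Hp)
      as [Iff Fff].
    + intros U HU. apply tau_mk; auto.
    + intros U V E. apply mk_ext; tauto.
    + rewrite (mk_const Bff); apply mk_ext; unfold cut, constB; simpl; tauto.
    + intros U V HU HV.
      replace (mk (fun _ : X => False) (fun x => U x /\ V x))
        with (mk (fun _ : X => False /\ False) (fun x => U x /\ V x)) by (apply mk_ext; tauto).
      apply glb_mk; auto.
    + intros I G HG.
      replace (mk (fun _ : X => False) (fun x => exists i, G i x))
        with (mk (fun x : X => exists i : I, False) (fun x => exists i, G i x))
        by (apply mk_ext; intro; [split; [intros [_ []] | intros []] | tauto]).
      apply (lub_mk Ott Off I (fun _ _ => False) G); auto.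
    + auto.
    + destruct (H _ _ Itt Iff) as [x [[E1 E2] Hu]].
      pose proof (proj1 (Mlem _ _ x (proj1 Itt)) E1) as M1.
      pose proof (proj1 (Mlem _ _ x (proj1 Iff)) E2) as M2.
      exists x. split.
      * intros l Hl. rewrite <- (pair_cut (p l)), <- (pair_cut (l x)). f_equal; apply dec_ext.
        -- rewrite (side_tt Ott Off p l T1 T2 Hp Hl), (Ftt _ (proj1 Hl)), (M1 _ (proj1 Hl)). tauto.
        -- rewrite (side_ff Ott Off p l T1 T2 Hp Hl), (Fff _ (proj2 Hl)), (M2 _ (proj2 Hl)). tauto.
      * intros x' Hx'. apply Hu. split.
        -- apply (proj2 (Mlem _ _ x' (proj1 Itt))). intros U HU.
           rewrite <- (Ftt _ HU), (Hx' _ (tau_mk Ott Off U (fun _ => False) HU (open_empty Off T2))).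
           exact (cut_mk_tt U (fun _ => False) x').
        -- apply (proj2 (Mlem _ _ x' (proj1 Iff))). intros U HU.
           rewrite <- (Fff _ HU), (Hx' _ (tau_mk Ott Off (fun _ => False) U (open_empty Ott T1) HU)).
           exact (cut_mk_ff (fun _ => False) U x').
Qed.

Theorem mainTheorem7 (X : Type) (Ott Off : (X -> Prop) -> Prop) :
  is_topology Ott -> is_topology Off ->
  (Bsober Ott Off <->
   (forall Ktt Kff : X -> Prop,
      irreducible_closed Ott Ktt -> irreducible_closed Off Kff ->
      exists! x : X,
        (forall y, Ktt y <-> closure Ott (fun z => z = x) y) /\
        (forall y, Kff y <-> closure Off (fun z => z = x) y))).
Proof.
  intros T1 T2. split; [apply dir1 | apply dir2]; auto.
Qed.
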